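(* Per-strategy scaling of payoffs does not in general map coarse correlated equilibria to reciprocally scaled coarse correlated equilibria. Precisely: there exist a finite two-player normal-form game $(G_1,G_2)$ with strategy sets $\mathcal{A}_1,\mathcal{A}_2$, positive functions $s_1:\mathcal{A}_1\to\mathbb{R}_{>0}$, $s_2:\mathcal{A}_2\to\mathbb{R}_{>0}$, and a coarse correlated equilibrium $\sigma$ of $(G_1,G_2)$ such that, with $\hat G_1(a_1,a_2)=s_2(a_2)G_1(a_1,a_2)$, $\hat G_2(a_1,a_2)=s_1(a_1)G_2(a_1,a_2)$ and $\hat\sigma(a_1,a_2)=\frac{\sigma(a_1,a_2)}{Z\,s_1(a_1)s_2(a_2)}$ where $Z=\sum_{a}\frac{\sigma(a)}{s_1(a_1)s_2(a_2)}$, the distribution $\hat\sigma$ is not a coarse correlated equilibrium of $(\hat G_1,\hat G_2)$.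
   Context: A joint distribution $\sigma$ on $\mathcal{A}_1\times\mathcal{A}_2$ is a coarse correlated equilibrium (CCE) of $(G_1,G_2)$ if for each player $p\in\{1,2\}$ and each $a'_p\in\mathcal{A}_p$: $\sum_{a}\sigma(a)\big(G_p(a'_p,a_{-p})-G_p(a)\big)\le 0$, where $a_{-p}$ is the other player's strategy. *)

(* Defs.v *)
From mathcomp Require Import all_boot all_order all_algebra.
From mathcomp Require Import reals.
Set Implicit Arguments. Unset Strict Implicit. Unset Printing Implicit Defensive.
Import Order.TTheory GRing.Theory Num.Theory.
Local Open Scope ring_scope.

Definition is_distr (R : realType) (T : finType) (sigma : T -> R) : Prop :=
  (forall t, 0 <= sigma t) /\ \sum_(t : T) sigma t = 1.

Definition is_CCE (R : realType) (A1 A2 : finType)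
  (G1 G2 : A1 -> A2 -> R) (sigma : A1 * A2 -> R) : Prop :=
  is_distr sigma /\
  (forall a1' : A1,
      \sum_(a : A1 * A2) sigma a * (G1 a1' a.2 - G1 a.1 a.2) <= 0) /\
  (forall a2' : A2,
      \sum_(a : A1 * A2) sigma a * (G2 a.1 a2' - G2 a.1 a.2) <= 0).

(* Main.v *)
Require Import Defs.
From mathcomp Require Import all_boot all_order all_algebra.
From mathcomp Require Import reals.
From mathcomp Require Import ring lra.
Import Order.TTheory GRing.Theory Num.Theory.
Local Open Scope ring_scope.

Lemma sum8 (R : realType) (F : bool * (bool * bool) -> R) :
  \sum_(a : bool * (bool * bool)) F a =
  F (true,(true,true)) + F (true,(true,false)) + F (true,(false,true)) + F (true,(false,false))
  + (F (false,(true,true)) + F (false,(true,false)) + F (false,(false,true)) + F (false,(false,false))).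
Proof.
have P2 (G : bool * bool -> R) : \sum_(b : bool * bool) G b = \sum_(i : bool) \sum_(j : bool) G (i, j).
  by rewrite pair_bigA; apply: eq_bigr; case.
have P3 : \sum_(a : bool * (bool * bool)) F a = \sum_(i : bool) \sum_(j : bool * bool) F (i, j).
  by rewrite pair_bigA; apply: eq_bigr; case.
rewrite P3 !big_bool /= !P2 !big_bool /=.
by rewrite !addrA.
Qed.

Theorem mainTheorem2 (R : realType) :
  exists (A1 A2 : finType) (G1 G2 : A1 -> A2 -> R)
         (s1 : A1 -> R) (s2 : A2 -> R) (sigma : A1 * A2 -> R),
    (forall a1, 0 < s1 a1) /\ (forall a2, 0 < s2 a2) /\
    is_CCE G1 G2 sigma /\
    let Z := \sum_(a : A1 * A2) sigma a / (s1 a.1 * s2 a.2) in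
    ~ is_CCE (fun a1 a2 => s2 a2 * G1 a1 a2) (fun a1 a2 => s1 a1 * G2 a1 a2)
             (fun a => sigma a / (Z * s1 a.1 * s2 a.2)).
Proof.
pose G2 := fun (a1 : bool) (a2 : bool * bool) =>
  if a2.1 then (if a1 then 1 else 0 : R)
  else if a2.2 then (if a1 then 0 else 1) else 0.
pose sigma := fun (a : bool * (bool * bool)) =>
  if a.2.1 then 0 else if a.1 then (if a.2.2 then 0 else 2^-1 : R)
  else (if a.2.2 then 2^-1 else 0).
exists bool, (bool * bool)%type, (fun _ _ => 0), G2,
  (fun _ => 1), (fun a2 => if a2.2 then 2 else 1), sigma.
split; first by move=> _; lra.
split; first by move=> [? []] /=; lra.
split.
  split; [split|split].
  - by move=> [a1 [[] []]]; rewrite /sigma /=; case: a1; lra.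
  - rewrite sum8 /sigma /= !(mul0r, subrr, mulr0, add0r, addr0, subr0, sub0r, mulr1, mulrN1, mul1r, divr1); lra.
  - by move=> _; rewrite sum8 /= !(mul0r, subrr, mulr0, add0r, addr0, subr0, sub0r, mulr1, mulrN1, mul1r, divr1).
  - move=> [[] []]; rewrite sum8 /G2 /sigma /= !(mul0r, subrr, mulr0, add0r, addr0, subr0, sub0r, mulr1, mulrN1, mul1r, divr1) //; lra.
move=> Z [_ [_ /(_ (true,true))]].
have HZ : Z = 3/4 by rewrite /Z sum8 /sigma /= !(mul0r, subrr, mulr0, add0r, addr0, subr0, sub0r, mulr1, mulrN1, mul1r, divr1); lra.
rewrite sum8 /G2 /sigma /= HZ !(mul0r, subrr, mulr0, add0r, addr0, subr0, sub0r, mulr1, mulrN1, mul1r, divr1).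
have -> : (2^-1 / (3 / 4) - 2^-1 / (3 / 4 * 2) : R) = 1/3 by field.
lra.
Qed.
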